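(* (i) If a predominated graph $(G,D)$ is MBD Dominator-critical and $D'\subseteq V(G)$ is a proper subset or a proper superset of $D$, then $(G,D')$ is not MBD Dominator-critical. (ii) For a graph $G$, there exists $D\subseteq V(G)$ such that $(G,D)$ is MBD Dominator-critical if and only if Staller wins the MBD game on $(G,\emptyset)$.
   Context: A predominated graph is a pair $(G,D)$ with $G$ a finite simple graph and $D\subseteq V(G)$. In the MBD game on $(G,D)$, Staller and Dominator alternately claim unclaimed vertices of $V(G)$ (including vertices of $D$), Staller first, until all are claimed; Staller wins if she claims all of $N_G[v]$ for some $v\in V(G)\setminus D$, Dominator wins otherwise. $(G,D)$ is MBD Dominator-critical if $D\neq\emptyset$, Dominator wins on $(G,D)$, and Staller wins on $(G,D\setminus\{v\})$ for every $v\in D$. *)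

(* Defs.v *)
From mathcomp Require Import all_boot.
Set Implicit Arguments. Unset Strict Implicit. Unset Printing Implicit Defensive.

(* A finite simple graph: vertex type T : finType, adjacency e : rel T,
   assumed symmetric and irreflexive (hypotheses in the theorem). *)

Section MBD.
Variables (T : finType) (e : rel T).

Definition cnbhd (v : T) : {set T} := [set u | (u == v) || e v u].

Definition staller_won (D S : {set T}) : bool :=
  [exists v in ~: D, cnbhd v \subset S].

(* Game value with n moves remaining; S = Staller's vertices,
   Dm = Dominator's vertices, st = true iff Staller is to move.
   Returns true iff Staller wins under optimal play. *)
Fixpoint staller_wins_from (D : {set T}) (n : nat) (S Dm : {set T}) (st : bool)
  : bool :=
  match n with
  | 0 => staller_won D S
  | n'.+1 =>
      if st then [exists v in ~: (S :|: Dm), staller_wins_from D n' (v |: S) Dm false]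
      else [forall v in ~: (S :|: Dm), staller_wins_from D n' S (v |: Dm) true]
  end.

(* MBD game on (G,D), Staller starts, all #|T| vertices get claimed. *)
Definition staller_wins_MBD (D : {set T}) : bool :=
  staller_wins_from D #|T| set0 set0 true.

Definition dominator_wins_MBD (D : {set T}) : bool := ~~ staller_wins_MBD D.

Definition MBD_dominator_critical (D : {set T}) : Prop :=
  [/\ D != set0, dominator_wins_MBD D &
      forall v, v \in D -> staller_wins_MBD (D :\ v)].

End MBD.

(* Main.v *)
Require Import Defs.
From mathcomp Require Import all_boot.

Section Aux.
Variables (T : finType) (e : rel T).

Lemma swf_mono n : forall (S Dm : {set T}) st (D D' : {set T}),
  D \subset D' -> staller_wins_from e D' n S Dm st -> staller_wins_from e D n S Dm st.
Proof.
elim: n => [|n IH] S Dm st D D' sub /=.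
  case/existsP=> v /andP[Hv Hs]; apply/existsP; exists v; rewrite Hs andbT.
  move: Hv; rewrite !inE; apply: contra; exact: (subsetP sub).
case: st.
  case/existsP=> v /andP[Hv H]; apply/existsP; exists v; rewrite Hv /=.
  exact: IH sub H.
move/forallP=> H; apply/forallP=> v; apply/implyP=> Hv.
have := H v; rewrite Hv /=; exact: IH sub.
Qed.

Lemma swf_setT n : forall (S Dm : {set T}) st,
  #|S :|: Dm| + n <= #|T| -> ~~ staller_wins_from e setT n S Dm st.
Proof.
elim: n => [|n IH] S Dm st Hc /=.
  apply/negP; case/existsP=> v /andP[]; by rewrite setCT in_set0.
have Hs : forall v, v \in ~: (S :|: Dm) -> #|(v |: S) :|: Dm| + n <= #|T|.
  by move=> v; rewrite inE => Hv; rewrite -setUA cardsU1 Hv add1n addSn -addnS.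
have Hs' : forall v, v \in ~: (S :|: Dm) -> #|S :|: (v |: Dm)| + n <= #|T|.
  by move=> v Hv; rewrite setUCA setUA; apply: Hs.
case: st.
  apply/negP; case/existsP=> v /andP[Hv H]; move: H; apply/negP; exact: IH (Hs v Hv).
have : 0 < #|~: (S :|: Dm)|.
  rewrite cardsCs setCK; move: Hc; rewrite addnS => Hc.
  by rewrite subn_gt0 (leq_ltn_trans (leq_addr n _) Hc).
rewrite card_gt0 => /set0Pn [v Hv].
apply/negP; move/forallP=> H; have := H v; rewrite Hv /=; apply/negP; exact: IH (Hs' v Hv).
Qed.

Lemma swins_mono (D D' : {set T}) :
  D \subset D' -> staller_wins_MBD e D' -> staller_wins_MBD e D.
Proof. exact: swf_mono. Qed.

End Aux.

Theorem mainTheorem13 (T : finType) (e : rel T)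
    (e_sym : symmetric e) (e_irr : irreflexive e) :
  (forall D D' : {set T},
      MBD_dominator_critical e D ->
      (D' \proper D \/ D \proper D') ->
      ~ MBD_dominator_critical e D') /\
  ((exists D : {set T}, MBD_dominator_critical e D) <->
     staller_wins_MBD e set0).
Proof.
split.
  move=> D D' [nz dw crit] [] /properP [sub [v Hv Hn]] [nz' dw' crit'].
  - move/negP: dw'; apply; apply: swins_mono (crit v Hv).
    apply/subsetP=> x Hx; rewrite !inE (subsetP sub _ Hx) andbT.
    by apply/eqP=> E; move: Hn; rewrite -E Hx.
  - move/negP: dw; apply; apply: swins_mono (crit' v Hv).
    apply/subsetP=> x Hx; rewrite !inE (subsetP sub _ Hx) andbT.
    by apply/eqP=> E; move: Hn; rewrite -E Hx.
split.
  move=> [D [nz dw crit]]; case/set0Pn: nz => v Hv.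
  apply: swins_mono (crit v Hv); exact: sub0set.
move=> Hw.
have HT : dominator_wins_MBD e setT by apply: swf_setT; rewrite setU0 cards0.
case: (@arg_minnP _ setT (dominator_wins_MBD e) (fun D : {set T} => #|D|) HT) => D HD Hmin.
exists D; split => //.
  apply/eqP=> E; move: HD; rewrite E /dominator_wins_MBD Hw.
  by [].
move=> v Hv; apply/negPn/negP => H.
have := Hmin _ H; rewrite (cardsD1 v D) Hv /=.
by rewrite add1n ltnn.
Qed.
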